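(* Let $K$ be a finite field and $G$ a finite group. Every maximal right ideal of $KG$ is checkable.
   Context: A right ideal $I\le KG$ is called checkable if there is $v\in KG$ with $I=\{a\in KG: va=0\}$. *)

(* Defs.v *)
(* The group algebra KG of a finite group G (= the whole
   finGroupType gT) over a finite field K is modelled as the K-valued
   functions on G, {ffun gT -> K}, with pointwise addition (the canonical
   zmodType on ffun) and convolution product
     (a * b)(g) = \sum_h a(h) b(h^-1 g),
   i.e. a = \sum_g a(g) g. *)
From HB Require Import structures.
From mathcomp Require Import all_boot all_order all_algebra all_fingroup.
Set Implicit Arguments. Unset Strict Implicit. Unset Printing Implicit Defensive.
Import GRing.Theory.
Local Open Scope ring_scope.

Section GroupAlgebra.
Variables (K : fieldType) (gT : finGroupType).

Definition KG := {ffun gT -> K}.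

Definition kgmul (a b : KG) : KG :=
  [ffun g => \sum_(h : gT) a h * b (h^-1 * g)%g].

Definition right_ideal (I : KG -> Prop) : Prop :=
  [/\ I 0,
      (forall a b, I a -> I b -> I (a - b)) &
      (forall a r, I a -> I (kgmul a r))].

Definition maximal_right_ideal (I : KG -> Prop) : Prop :=
  [/\ right_ideal I,
      (exists a, ~ I a) &
      (forall J, right_ideal J -> (forall a, I a -> J a) ->
         (forall a, J a -> I a) \/ (forall a, J a))].

Definition checkable (I : KG -> Prop) : Prop :=
  exists v : KG, forall a, I a <-> kgmul v a = 0.

End GroupAlgebra.

(* Main.v *)
Require Import Defs.
From HB Require Import structures.
From mathcomp Require Import all_boot all_order all_algebra all_fingroup all_field.
From Stdlib Require Import ClassicalEpsilon.
Set Implicit Arguments. Unset Strict Implicit. Unset Printing Implicit Defensive.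
Import GRing.Theory.
Local Open Scope ring_scope.

Section Aux.
Variables (K : fieldType) (gT : finGroupType).
Local Notation KG := (KG K gT).
Local Notation kgmul := (@kgmul K gT).

Definition dk (t0 : gT) (k : K) : KG := [ffun t => if t == t0 then k else 0].

Lemma kgmul_dk (x : KG) t0 k g : kgmul x (dk t0 k) g = x (g * t0^-1)%g * k.
Proof.
rewrite ffunE (bigD1 (g * t0^-1)%g) //= big1 ?addr0.
  by rewrite ffunE invMg invgK mulgVK eqxx.
move=> h hne; rewrite ffunE; case: eqP => [e|]; last by rewrite mulr0.
by case/eqP: hne; rewrite -e invMg invgK mulKVg.
Qed.

Lemma kgmul0 (v : KG) : kgmul v 0 = 0.
Proof. by apply/ffunP=> g; rewrite !ffunE big1 // => h _; rewrite ffunE mulr0. Qed.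

Lemma kgmulB (v a b : KG) : kgmul v (a - b) = kgmul v a - kgmul v b.
Proof.
apply/ffunP=> g; rewrite !ffunE -sumrB; apply: eq_bigr => h _.
by rewrite !ffunE mulrBr.
Qed.

Lemma kgmulA (v a r : KG) : kgmul (kgmul v a) r = kgmul v (kgmul a r).
Proof.
apply/ffunP=> g; rewrite !ffunE.
under eq_bigr do rewrite ffunE mulr_suml.
rewrite exchange_big /=; apply: eq_bigr => h _.
symmetry; rewrite ffunE mulr_sumr (reindex_inj (mulgI h^-1)%g) /=.
apply: eq_bigr => m _; rewrite mulrA; congr (_ * _ * r _).
by rewrite invMg invgK mulgA mulgK.
Qed.

Lemma kgmul0l (r : KG) : kgmul 0 r = 0.
Proof. by apply/ffunP=> g; rewrite !ffunE big1 // => h _; rewrite ffunE mul0r. Qed.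

End Aux.

Lemma key (K : finFieldType) (gT : finGroupType) (I : KG K gT -> Prop) :
  right_ideal I -> (exists a, ~ I a) ->
  exists2 v : {ffun gT -> K}, v != 0 &
    forall x, I x -> \sum_(h : gT) v h * x (h^-1)%g = 0.
Proof.
move=> [I0 IB IM] [x0 nIx0].
have IN a : I a -> I (- a) by move=> Ia; rewrite -sub0r; exact: IB.
have ID a b : I a -> I b -> I (a + b).
  by move=> Ia Ib; rewrite -(opprK b); apply: IB => //; exact: IN.
have IS a k : I a -> I ([ffun g => a g * k] : {ffun gT -> K}).
  move=> Ia; have := IM a (dk 1%g k) Ia.
  suff -> : kgmul a (dk 1%g k) = [ffun g => a g * k] by [].
  by apply/ffunP=> g; rewrite kgmul_dk ffunE invg1 mulg1.
have Isum (J : finType) (F : J -> {ffun gT -> K}) :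
    (forall j, I (F j)) -> I (\sum_j F j).
  by move=> HF; apply: (big_ind I) => //; move=> *; exact: ID.
pose sel (x : {ffun gT -> K}) : {ffun gT -> K} :=
  if excluded_middle_informative (I x) then x else 0.
have Isel x : I (sel x) by rewrite /sel; case: excluded_middle_informative.
have selE x : I x -> sel x = x.
  by rewrite /sel; case: excluded_middle_informative.
pose n := #|gT|.
pose A : 'M[K]_(#|{: {ffun gT -> K}}|, n) :=
  \matrix_(j, i) sel (enum_val j) (enum_val i)^-1%g.
have rkA : (\rank A < n)%N.
  rewrite ltn_neqAle rank_leq_col andbT; apply/negP => /eqP rA.
  have full : row_full A by rewrite /row_full rA.
  have /submxP [D eD] := submx_full (\row_i x0 (enum_val i)^-1%g) full.
  apply: nIx0.
  have -> : x0 = \sum_j [ffun g => sel (enum_val j) g * D 0 j].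
    apply/ffunP => g; rewrite sum_ffunE.
    have := congr1 (fun M : 'rV_n => M 0 (enum_rank g^-1%g)) eD.
    rewrite /= !mxE enum_rankK invgK => ->.
    by apply: eq_bigr => j _; rewrite !mxE ffunE enum_rankK invgK mulrC.
  by apply: Isum => j; apply: IS.
pose M := cokermx A.
have M0 : M != 0.
  rewrite -mxrank_eq0 mxrank_coker; rewrite -lt0n subn_gt0; exact: rkA.
case: (pickP (fun ij : 'I_n * 'I_n => M ij.1 ij.2 != 0)) => [[i j] /= Mij|H]; last first.
  case/negP: M0; apply/eqP/matrixP => i j.
  by have := H (i, j); rewrite /= => /negbFE/eqP ->; rewrite mxE.
exists [ffun h => M (enum_rank h) j].
  apply/eqP => /ffunP/(_ (enum_val i)); rewrite !ffunE enum_valK => E.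
  by rewrite E eqxx in Mij.
move=> x Ix.
have := congr1 (fun N : 'M[K]_(#|{: {ffun gT -> K}}|, n) => N (enum_rank x) j) (mulmx_coker A).
rewrite !mxE => E; apply: (etrans _ E).
rewrite (reindex (fun i : 'I_n => enum_val i)) /=; last first.
  by exists enum_rank => [k _|k _]; [exact: enum_valK | exact: enum_rankK].
apply: eq_bigr => k _; by rewrite [A _ _]mxE ffunE enum_valK enum_rankK selE // mulrC.
Qed.


Theorem mainTheorem6 (K : finFieldType) (gT : finGroupType)
  (I : KG K gT -> Prop) :
  maximal_right_ideal I -> checkable I.
Proof.
move=> [RI ex Imax].
have [v v0 Hv] := key RI ex.
case: RI => I0 IB IM.
pose J := fun a : KG K gT => kgmul v a = 0.
have RJ : right_ideal J.
  split; rewrite /J.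
  - exact: kgmul0.
  - by move=> a b Ja Jb; rewrite kgmulB Ja Jb subrr.
  - by move=> a r Ja; rewrite -kgmulA Ja kgmul0l.
have IJ : forall a, I a -> J a.
  move=> x Ix; apply/ffunP => g; rewrite !ffunE.
  have := Hv _ (IM x (dk g^-1%g 1) Ix) => E; rewrite -[RHS]E.
  by apply: eq_bigr => h _; rewrite kgmul_dk invgK mulr1.
exists v => a; split; first exact: IJ.
case: (Imax J RJ IJ) => [H|H]; first exact: H.
have := H (dk 1%g 1); rewrite /J => E.
case/eqP: v0; apply/ffunP => g.
have := congr1 (fun f : KG K gT => f g) E; rewrite kgmul_dk invg1 mulg1 mulr1 => ->.
by rewrite ffunE.
Qed.
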